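(* Let $n\ge2$ and let $A=(a_{ij})$ be an $n\times n$ nonnegative irreducible matrix with row sums $r_1\ge r_2\ge\cdots\ge r_n$. Let $S=\min_{1\le i\le n}a_{ii}$ and $T=\min_{i\ne j}a_{ij}$. Then \[\rho(A)\ge \frac{r_n+S-T+\sqrt{(r_n-S+T)^2+4T\sum_{k=1}^{n-1}(r_k-r_n)}}{2}.\] Equality holds if and only if $r_1=\cdots=r_n$, or $T>0$ and for some $2\le t\le n$: (i) $a_{kk}=S$ for $1\le k\le t-1$; (ii) $a_{kl}=T$ for all $1\le k\le n$, $1\le l\le t-1$, $k\ne l$; (iii) $r_t=\cdots=r_n$.
   Context: $\rho(A)$ denotes the spectral radius of $A$. *)

(* Defs.v *)
(* Matrices with entries in algC (algebraic complex numbers);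
   nonnegativity of entries forces them to be real. *)
From HB Require Import structures.
From mathcomp Require Import all_boot all_order all_algebra all_field.
Set Implicit Arguments. Unset Strict Implicit. Unset Printing Implicit Defensive.
Import Order.TTheory GRing.Theory Num.Theory.
Local Open Scope ring_scope.

(* The (complex) eigenvalues of A, listed with algebraic multiplicity:
   the roots of the characteristic polynomial in the algebraically closed algC. *)
Definition eigenvalues n (A : 'M[algC]_n) : seq algC :=
  sval (closed_field_poly_normal (char_poly A)).

Definition spectral_radius n (A : 'M[algC]_n) : algC :=
  \big[Num.max/0]_(z <- eigenvalues A) `|z|.

Definition nonneg_mx n (A : 'M[algC]_n) : Prop := forall i j, 0 <= A i j.

(* A is reducible iff, after a simultaneous permutation of rows and columns,
   it has the block form [[B, 0], [C, D]] with square nonempty B, D; i.e. iff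
   some proper nonempty index set I has A i j = 0 for i in I, j not in I. *)
Definition reducible_mx n (A : 'M[algC]_n) : Prop :=
  exists I : {set 'I_n}, [/\ I != set0, I != setT &
    forall i j, i \in I -> j \notin I -> A i j = 0].
Definition irreducible_mx n (A : 'M[algC]_n) : Prop := ~ reducible_mx A.

Definition row_sum n (A : 'M[algC]_n) (i : 'I_n) : algC := \sum_(j < n) A i j.

(* minimum of a nonempty list (default 0 for the empty list, never used here) *)
Definition seq_min (s : seq algC) : algC := foldr Num.min (head 0 s) s.

Definition diag_min n (A : 'M[algC]_n) : algC :=
  seq_min [seq A i i | i <- enum 'I_n].

Definition offdiag_min n (A : 'M[algC]_n) : algC :=
  seq_min [seq A ij.1 ij.2 | ij <- enum [pred ij : 'I_n * 'I_n | ij.1 != ij.2]].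

(* r_n, the last row sum (index n-1 in 0-based numbering) *)
Definition last_row_sum n (A : 'M[algC]_n) : algC :=
  nth 0 [seq row_sum A i | i <- enum 'I_n] n.-1.

(* Main.v *)
Require Import Defs.
From HB Require Import structures.
From mathcomp Require Import all_boot all_order all_algebra all_field.
From mathcomp Require Import polyrcf.
From mathcomp Require Import ring lra zify.
From Stdlib Require Import Classical.
Set Implicit Arguments. Unset Strict Implicit. Unset Printing Implicit Defensive.
Import Order.TTheory GRing.Theory Num.Theory.
Local Open Scope ring_scope.


Lemma exists_argmin n (f : 'I_n -> algR) : (0 < n)%N -> exists i, forall j, f i <= f j.
Proof.
case: n f => [//|m] f _.
exists [arg min_(i < ord0) f i]%O.
by case: arg_minP => // i _ H j; apply: H.
Qed.

Lemma exists_argmax n (f : 'I_n -> algR) : (0 < n)%N -> exists i, forall j, f j <= f i.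
Proof.
move=> n0; have [i Hi] := exists_argmin (fun i => - f i) n0.
by exists i => j; have := Hi j; rewrite lerN2.
Qed.

Definition adjU n (A : 'M[algR]_n) : 'cV[{poly algR}]_n :=
  \adj (char_poly_mx A) *m const_mx 1.

Lemma adjU_rel n (A : 'M[algR]_n) (Y : algR) (i : 'I_n) :
  Y * (adjU A i 0).[Y] = (char_poly A).[Y] + \sum_k A i k * (adjU A k 0).[Y].
Proof.
have H : char_poly_mx A *m adjU A = (char_poly A) *: const_mx 1.
  by rewrite /adjU mulmxA mul_mx_adj mul_scalar_mx.
have Hi := congr1 (fun M : 'cV_n => M i 0) H.
rewrite /= /char_poly_mx mulmxBl mul_scalar_mx in Hi.
rewrite !mxE in Hi.
have E : \sum_j (A ^ polyC)%sesqui i j * adjU A j 0 = \sum_k (A i k)%:P * adjU A k 0.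
  by apply eq_bigr => k _; rewrite mxE.
rewrite E mulr1 in Hi.
have Hi' : 'X * adjU A i 0 = char_poly A + \sum_k (A i k)%:P * adjU A k 0.
  by rewrite -Hi [adjU A i 0]mxE; ring.
have := congr1 (fun q => q.[Y]) Hi'; rewrite /= hornerM hornerX hornerD horner_sum.
move=> ->; congr (_ + _); rewrite horner_sum; apply: eq_bigr => k _; exact: hornerCM.
Qed.



Lemma char_poly_pos n (A : 'M[algR]_n) (th : algR) :
  (forall mu, th <= mu -> ~~ root (char_poly A) mu) ->
  forall Y, th <= Y -> 0 < (char_poly A).[Y].
Proof.
move=> Hno Y hY.
have lc : lead_coef (char_poly A) = 1 by apply/monicP/char_poly_monic.
have lc0 : 0 < lead_coef (char_poly A) by rewrite lc ltr01.
have [N HN] := @poly_pinfty_gt_lc _ (char_poly A) lc0.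
set B := Y + `|N - Y|.
have hB1 : Y <= B by rewrite /B lerDl normr_ge0.
have hB2 : N <= B.
  have := ler_norm (N - Y); rewrite /B => h; lra.
have pB := HN B hB2; rewrite lc in pB.
rewrite ltNge; apply/negP => pY.
have h0 : (char_poly A).[Y] <= 0 <= (char_poly A).[B] by rewrite pY /=; lra.
have [z /andP[z1 z2] rz] := @poly_ivt _ (char_poly A) Y B hB1 h0.
by move: (Hno z (le_trans hY z1)); rewrite rz.
Qed.

Lemma LB_R n (A : 'M[algR]_n) (x : 'I_n -> algR) th :
  (0 < n)%N -> (forall i j, 0 <= A i j) -> (forall i, 0 < x i) -> 0 < th ->
  (forall i, th * x i <= \sum_j A i j * x j) ->
  exists2 mu, th <= mu & root (char_poly A) mu.
Proof.
move=> n0 A0 x0 th0 Hx.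
apply: NNPP => Hne.
have Hno : forall mu, th <= mu -> ~~ root (char_poly A) mu.
  by move=> mu hmu; apply/negP => r; apply: Hne; exists mu.
have hp := char_poly_pos Hno.
pose u Y k := (adjU A k 0).[Y].
have rel : forall Y i, Y * u Y i = (char_poly A).[Y] + \sum_k A i k * u Y k.
  by move=> Y i; apply: adjU_rel.
have posnn : forall Y, th <= Y -> (forall k, 0 <= u Y k) -> forall k, 0 < u Y k.
  move=> Y hY hk k.
  have s0 : 0 <= \sum_j A k j * u Y j by apply: sumr_ge0 => j _; apply: mulr_ge0.
  have h1 : 0 < Y * u Y k by rewrite rel; have := hp Y hY; lra.
  by rewrite pmulr_rgt0 in h1; last lra.
pose tot := \sum_i \sum_j A i j.
pose Y0 := 1 + th + tot.
have rowle : forall i, \sum_j A i j <= tot.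
  move=> i; rewrite /tot [X in _ <= X](bigD1 i) //= lerDl.
  by apply: sumr_ge0 => ? _; apply: sumr_ge0 => ? _; exact: A0.
have tot0 : 0 <= tot by apply: sumr_ge0 => ? _; apply: sumr_ge0 => ? _; exact: A0.
have hY0 : th <= Y0 by rewrite /Y0; lra.
have nnY0 : forall k, 0 <= u Y0 k.
  have [i Hi] := exists_argmin (u Y0) n0.
  move=> k; apply: le_trans (Hi k).
  rewrite leNgt; apply/negP => neg.
  have h2 : \sum_j A i j * u Y0 i <= \sum_k A i k * u Y0 k.
    by apply: ler_sum => j _; apply: ler_wpM2l.
  rewrite -mulr_suml in h2.
  have := rel Y0 i; have := hp Y0 hY0; have := rowle i.
  set r := \sum_j A i j; set p := (char_poly A).[Y0]; set U := u Y0 i.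
  move=> h3 h4 h5.
  have h6 : (Y0 - r) * U < 0 by rewrite pmulr_rlt0 //; rewrite /Y0; lra.
  have h2' : r * U <= \sum_k A i k * u Y0 k := h2.
  rewrite mulrBl h5 in h6; lra.
pose Q := \prod_k adjU A k 0.
have QE : forall y, Q.[y] = \prod_k u y k by move=> y; rewrite /Q horner_prod.
have Qroot : forall y k, root (adjU A k 0) y -> root Q y.
  move=> y k; rewrite !rootE QE /u => /eqP hk; apply/eqP.
  by rewrite (bigD1 k) //= hk mul0r.
have QY0 : 0 < Q.[Y0].
  by rewrite QE; apply: prodr_gt0 => k _; apply: (posnn Y0).
have sweep : forall z, th <= z -> z <= Y0 ->
    (forall y, z < y -> y < Y0 -> ~~ root Q y) -> forall k, 0 < u z k.
  move=> z hz1 hz2 hno; apply: (posnn z) => // k.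
  rewrite leNgt; apply/negP => neg.
  have pos0 := posnn Y0 hY0 nnY0 k.
  have h0 : (adjU A k 0).[z] <= 0 <= (adjU A k 0).[Y0].
    by rewrite -/(u z k) -/(u Y0 k); apply/andP; split; lra.
  have [w /andP[w1 w2] rw] := poly_ivt hz2 h0.
  have rw' := rw; rewrite rootE -/(u w k) in rw'; move/eqP: rw' => rw'.
  have wz : z < w by rewrite lt_neqAle w1 andbT; apply/eqP => e; move: neg; rewrite e rw'; lra.
  have wY : w < Y0 by rewrite lt_neqAle w2 andbT; apply/eqP => e; move: pos0; rewrite -e rw'; lra.
  by move: (hno w wz wY); rewrite (Qroot w k rw).
have upos : forall k, 0 < u th k.
  case: (prev_rootP Q th Y0).
  - by move=> Q0; move: QY0; rewrite Q0 horner0 ltxx.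
  - move=> y _ Qy hy hno; exfalso.
    move: hy; rewrite in_itv /= => /andP[hy1 hy2].
    have hall := sweep y (ltW hy1) (ltW hy2).
    have : 0 < Q.[y].
      rewrite QE; apply: prodr_gt0 => k _; apply: hall => w w1 w2.
      by apply: hno; rewrite in_itv /= w1 w2.
    by rewrite Qy ltxx.
  - move=> c _ _ hno; apply: sweep => //.
    by move=> w w1 w2; apply: hno; rewrite in_itv /= w1 w2.
have [i Hi] := exists_argmax (fun k => x k / u th k) n0.
set lam := x i / u th i.
have lam0 : 0 < lam by rewrite /lam divr_gt0.
have xle : forall j, x j <= lam * u th j.
  move=> j; have := Hi j; rewrite ler_pdivrMr // => h; by rewrite mulrC.
have h1 : \sum_j A i j * x j <= lam * \sum_j A i j * u th j.
  rewrite mulr_sumr; apply: ler_sum => j _.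
  by rewrite mulrCA; apply: ler_wpM2l.
have h2 := rel th i.
have h3 : lam * u th i = x i by rewrite /lam divfK // gt_eqF.
have h4 := Hx i.
have h5 := hp th (lexx th).
have h6 : lam * (th * u th i) = th * x i by rewrite mulrCA h3.
rewrite h2 in h6.
nra.
Qed.

Lemma eig_mem n (A : 'M[algC]_n) z : (z \in eigenvalues A) = root (char_poly A) z.
Proof.
rewrite /eigenvalues; case: closed_field_poly_normal => r /= Hr.
by rewrite [in RHS]Hr (monicP (char_poly_monic A)) scale1r root_prod_XsubC.
Qed.

Lemma bigmax_facts (s : seq algC) :
  let M := \big[Num.max/0]_(w <- s) `|w| in
  [/\ 0 <= M, (forall z, z \in s -> `|z| <= M) &
      (forall c, 0 <= c -> (forall z, z \in s -> `|z| <= c) -> M <= c)].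
Proof.
elim: s => [|w s [IH1 IH2 IH3]] /=.
  by rewrite big_nil; split => // c c0 _.
rewrite big_cons.
set M := \big[Num.max/0]_(w <- s) `|w|.
have wR : `|w| \is Num.real by apply: normr_real.
have MR : M \is Num.real by apply: ger0_real.
case: (real_leP wR MR) => h.
  split; first exact: IH1.
    by move=> z; rewrite inE => /orP[/eqP->|/IH2].
  move=> c c0 Hc; apply: IH3 => // z zs; apply: Hc.
  by rewrite inE zs orbT.
split; first exact: normr_ge0.
  move=> z; rewrite inE => /orP[/eqP->|/IH2 h2] //.
  exact: le_trans h2 (ltW h).
by move=> c c0 Hc; apply: Hc; rewrite inE eqxx.
Qed.

Lemma sr_ge0 n (A : 'M[algC]_n) : 0 <= spectral_radius A.
Proof. by case: (bigmax_facts (eigenvalues A)). Qed.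

Lemma sr_ge n (A : 'M[algC]_n) z : root (char_poly A) z -> `|z| <= spectral_radius A.
Proof. by rewrite -eig_mem; case: (bigmax_facts (eigenvalues A)) => _ H _; apply: H. Qed.

Lemma sr_le n (A : 'M[algC]_n) c : 0 <= c ->
  (forall z, root (char_poly A) z -> `|z| <= c) -> spectral_radius A <= c.
Proof.
move=> c0 H; case: (bigmax_facts (eigenvalues A)) => _ _ H3; apply: H3 => // z.
by rewrite eig_mem; apply: H.
Qed.

Lemma exists_argmax_C n (f : 'I_n -> algC) : (0 < n)%N ->
  (forall j, f j \is Num.real) -> exists i, forall j, f j <= f i.
Proof.
move=> n0 fR.
have [i Hi] := exists_argmax (fun j => in_algR (fR j)) n0.
by exists i => j; have := Hi j.
Qed.

Lemma char_poly_tr n (A : 'M[algC]_n) : char_poly A^T = char_poly A.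
Proof.
rewrite /char_poly -det_tr; congr (\det _).
by apply/matrixP => i j; rewrite !mxE eq_sym.
Qed.

Lemma LB_C n (A : 'M[algC]_n) (B : 'M[algR]_n) (x : 'I_n -> algR) (th : algR) :
  (forall i j, A i j = val (B i j)) -> (0 < n)%N ->
  (forall i j, 0 <= B i j) -> (forall i, 0 < x i) ->
  (forall i, th * x i <= \sum_j B i j * x j) ->
  val th <= spectral_radius A.
Proof.
move=> AB n0 B0 x0 Hx.
case: (leP th 0) => th0.
  by apply: le_trans (sr_ge0 A); have : val th <= val (0 : algR) := th0.
have [mu thmu rmu] := LB_R n0 B0 x0 th0 Hx.
have rA : root (char_poly A) (val mu).
  have -> : A = map_mx algRval B by apply/matrixP => i j; rewrite mxE AB.
  by rewrite -map_char_poly; apply: rmorph_root.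
apply: le_trans (sr_ge rA).
have mu0 : (0 : algR) <= mu by apply: le_trans (ltW th0) thmu.
have -> : `|val mu| = val mu by apply: ger0_norm.
exact: thmu.
Qed.

Lemma UB_C n (A : 'M[algC]_n) (B : 'M[algR]_n) (x : 'I_n -> algR) (th : algR) :
  (forall i j, A i j = val (B i j)) -> (0 < n)%N ->
  (forall i j, 0 <= B i j) -> (forall i, 0 < x i) ->
  (forall i, \sum_j B i j * x j = th * x i) ->
  spectral_radius A <= val th.
Proof.
move=> AB n0 B0 x0 Hx.
have th0 : (0 : algR) <= th.
  pose i0 := Ordinal n0.
  have : 0 <= th * x i0 by rewrite -Hx; apply: sumr_ge0 => j _; apply: mulr_ge0 => //; apply: ltW.
  by rewrite pmulr_lge0.
have HxC : forall i, \sum_j A i j * val (x j) = val th * val (x i).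
  move=> i; have := congr1 val (Hx i); rewrite rmorph_sum rmorphM /= => <-.
  by apply: eq_bigr => j _; rewrite AB.
have A0 : forall i j, 0 <= A i j by move=> i j; rewrite AB; exact: B0.
have xC0 : forall i, 0 < val (x i) by move=> i; exact: x0.
apply: sr_le; first exact: th0.
move=> z; rewrite -char_poly_tr -eigenvalue_root_char => /eigenvalueP [v Hv vN0].
have Hvi : forall i, \sum_j A i j * v 0 j = z * v 0 i.
  move=> i; have := congr1 (fun M : 'rV_n => M 0 i) Hv; rewrite !mxE => <-.
  by apply: eq_bigr => j _; rewrite mxE mulrC.
have fR : forall j, `|v 0 j| / val (x j) \is Num.real.
  by move=> j; apply: ger0_real; apply: divr_ge0 => //; apply: ltW.
have [i Hi] := exists_argmax_C n0 fR.
set m := `|v 0 i| / val (x i).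
have m0 : 0 <= m by rewrite /m divr_ge0 // ltW.
have vle : forall j, `|v 0 j| <= m * val (x j).
  by move=> j; have := Hi j; rewrite ler_pdivrMr.
have vi0 : 0 < `|v 0 i|.
  rewrite lt_neqAle normr_ge0 andbT eq_sym normr_eq0; apply/negP => /eqP vi.
  move/negP: vN0; apply; apply/eqP/rowP => j; rewrite mxE.
  have := vle j; rewrite /m vi normr0 mul0r mul0r => h.
  by apply/eqP; rewrite -normr_eq0 eq_le h normr_ge0.
have mi : m * val (x i) = `|v 0 i| by rewrite /m divfK // gt_eqF.
have key : `|z| * `|v 0 i| <= val th * `|v 0 i|.
  rewrite -normrM -Hvi.
  have h1 : \sum_j `|A i j * v 0 j| <= \sum_j A i j * (m * val (x j)).
    apply: ler_sum => j _; rewrite normrM (ger0_norm (A0 i j)).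
    by apply: ler_wpM2l.
  have h2 : \sum_j A i j * (m * val (x j)) = val th * `|v 0 i|.
    rewrite -mi mulrCA -HxC mulr_sumr; apply: eq_bigr => j _; by rewrite mulrCA.
  rewrite -h2; exact: le_trans (ler_norm_sum _ _ _) h1.
by rewrite ler_pM2r in key.
Qed.

Definition slack n (B : 'M[algR]_n) (x : 'I_n -> algR) th k :=
  \sum_j B k j * x j - th * x k.

Definition posset n (B : 'M[algR]_n) (x : 'I_n -> algR) th : {set 'I_n} :=
  [set i | 0 < slack B x th i].

Lemma perturb_sum n (B : 'M[algR]_n) (x : 'I_n -> algR) j e k :
  \sum_l B k l * (x l + (if l == j then e else 0)) = \sum_l B k l * x l + B k j * e.
Proof.
rewrite -[RHS]addr0 -addrA; under eq_bigr do rewrite mulrDr.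
rewrite big_split /=; congr (_ + _).
rewrite (bigD1 j) //= eqxx addr0 big1 => [|l /negPf->]; by rewrite ?mulr0 ?addr0.
Qed.

Lemma strict_R n (B : 'M[algR]_n) (rho : algR) (x : 'I_n -> algR) th :
  (0 < n)%N -> (forall i j, 0 <= B i j) ->
  (forall I : {set 'I_n}, I != set0 -> I != setT ->
     exists i j, [/\ i \in I, j \notin I & B i j != 0]) ->
  (forall (y : 'I_n -> algR) t, (forall i, 0 < y i) ->
     (forall i, t * y i <= \sum_j B i j * y j) -> t <= rho) ->
  (forall i, 0 < x i) -> (forall i, 0 <= slack B x th i) ->
  (exists i, 0 < slack B x th i) -> th < rho.
Proof.
move=> n0 B0 Hirr HLB x0 s0 [i1 si1].
pose P m := exists y : 'I_n -> algR, [/\ forall i, 0 < y i, forall i, 0 <= slack B y th i &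
   (m <= #|posset B y th|)%N].
have HP : forall m, (m <= n)%N -> P m.
  elim=> [_|m IH hm].
    by exists x; split.
  case: (posnP m) => [->|mpos].
    exists x; split => //; rewrite card_gt0; apply/set0Pn; exists i1; by rewrite inE.
  have [y [y0 sy hc]] := IH (ltnW hm).
  set J := posset B y th in hc.
  case: (eqVneq J setT) => JT.
    by exists y; split => //; rewrite -/J JT cardsT card_ord.
  have JN0 : J != set0 by rewrite -card_gt0; apply: leq_trans hc.
  have h1 : ~: J != set0 by apply: contra_neq JT => h; rewrite -[J]setCK h setC0.
  have h2 : ~: J != setT by apply: contra_neq JN0 => h; rewrite -[J]setCK h setCT.
  have [i [j [iI jI Bij]]] := Hirr (~: J) h1 h2.
  rewrite inE in iI; rewrite inE negbK in jI.
  have sj : 0 < slack B y th j by move: jI; rewrite inE.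
  set e := slack B y th j / (`|th| + 1).
  have e0 : 0 < e by rewrite /e divr_gt0 //; have := normr_ge0 th; lra.
  have ee : `|th| * e < slack B y th j.
    have hne : `|th| + 1 != 0 by rewrite gt_eqF //; have := normr_ge0 th; lra.
    have h : e * (`|th| + 1) = slack B y th j by rewrite /e divfK.
    have := ler_norm th; have := normr_ge0 th. nra.
  pose z k := y k + (if k == j then e else 0).
  have slz : forall k, slack B z th k = slack B y th k + B k j * e - (if k == j then th * e else 0).
    move=> k; rewrite /slack perturb_sum /z mulrDr; case: (k == j); lra.
  have Bij0 : 0 < B i j by rewrite lt_neqAle eq_sym Bij B0.
  have the : th * e <= `|th| * e by rewrite ler_pM2r // ler_norm.
  have Be : forall k, 0 <= B k j * e by move=> k; apply: mulr_ge0 => //; exact: ltW.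
  have Bie : 0 < B i j * e by apply: mulr_gt0.
  exists z; split.
  - move=> k; rewrite /z; case: (k == j); have := y0 k; lra.
  - move=> k; rewrite slz; have := sy k; have := Be k; case: eqP => [->|_].
      lra.
    lra.
  - apply: leq_trans (_ : #|i |: J| <= _)%N.
      by rewrite cardsU1 iI add1n ltnS.
    apply: subset_leq_card; apply/subsetP => k; rewrite /J /posset !inE => /orP[/eqP->|kJ].
      rewrite slz; have := sy i; case: eqP => [ij|_].
        by move: iI; rewrite ij jI.
      lra.
    rewrite slz; have := Be k; move: kJ; case: eqP => [->|_].
      lra.
    lra.
have [y [y0 sy hc]] := HP n (leqnn n).
have allpos : forall k, 0 < slack B y th k.
  move=> k; have : posset B y th = setT.
    by apply/eqP; rewrite eqEcard subsetT cardsT card_ord hc.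
  by move/setP/(_ k); rewrite !inE.
have [k Hk] := exists_argmin (fun k => slack B y th k / y k) n0.
set d := slack B y th k / y k.
have d0 : 0 < d by rewrite /d divr_gt0.
have : th + d <= rho.
  apply: (HLB y) => // l; have := Hk l; rewrite ler_pdivlMr // => h.
  move: h; rewrite /slack -/d; lra.
lra.
Qed.

Definition rsR n (B : 'M[algR]_n) i := \sum_j B i j.

Lemma cw_eq n (B : 'M[algR]_n) (rho : algR) (x : 'I_n -> algR) th :
  (0 < n)%N -> (forall i j, 0 <= B i j) ->
  (forall I : {set 'I_n}, I != set0 -> I != setT ->
     exists i j, [/\ i \in I, j \notin I & B i j != 0]) ->
  (forall (y : 'I_n -> algR) t, (forall i, 0 < y i) ->
     (forall i, t * y i <= \sum_j B i j * y j) -> t <= rho) ->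
  (forall (y : 'I_n -> algR) t, (forall i, 0 < y i) ->
     (forall i, \sum_j B i j * y j = t * y i) -> rho <= t) ->
  (forall i, 0 < x i) -> (forall i, 0 <= slack B x th i) ->
  th <= rho /\ (rho = th <-> forall i, slack B x th i = 0).
Proof.
move=> n0 B0 Hirr HLB HUB x0 s0.
have lb : th <= rho.
  by apply: (HLB x) => // i; have := s0 i; rewrite /slack; lra.
split => //; split.
  move=> e i; have := s0 i; rewrite le_eqVlt => /orP[/eqP<-//|hi].
  have := strict_R n0 B0 Hirr HLB x0 s0 (ex_intro _ i hi); rewrite e ltxx //.
move=> hz; apply/eqP; rewrite eq_le lb andbT.
by apply: (HUB x) => // i; have := hz i; rewrite /slack; lra.
Qed.

Lemma sum_filter_last n (f : 'I_n -> algR) (l : 'I_n) :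
  val l = n.-1 -> f l = 0 ->
  \sum_(k < n | (k < n.-1)%N) f k = \sum_k f k.
Proof.
move=> hl fl; rewrite [RHS](bigID (fun k : 'I_n => (k < n.-1)%N)) /=.
rewrite [X in _ = _ + X]big1 ?addr0 // => k hk.
have -> : k = l; last exact: fl.
apply: val_inj => /=; rewrite hl; have := ltn_ord k; move: hk; rewrite -leqNgt; lia.
Qed.

Lemma main_R n (B : 'M[algR]_n) (rho S T rn : algR) (l : 'I_n) :
  (1 < n)%N -> val l = n.-1 -> rn = rsR B l ->
  (forall i j, 0 <= B i j) ->
  (forall I : {set 'I_n}, I != set0 -> I != setT ->
     exists i j, [/\ i \in I, j \notin I & B i j != 0]) ->
  (forall i j : 'I_n, (i <= j)%N -> rsR B j <= rsR B i) ->
  (forall i, S <= B i i) -> (forall i j, i != j -> T <= B i j) -> 0 <= T ->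
  (forall (y : 'I_n -> algR) t, (forall i, 0 < y i) ->
     (forall i, t * y i <= \sum_j B i j * y j) -> t <= rho) ->
  (forall (y : 'I_n -> algR) t, (forall i, 0 < y i) ->
     (forall i, \sum_j B i j * y j = t * y i) -> rho <= t) ->
  let bound := (rn + S - T + Num.sqrt ((rn - S + T) ^+ 2 +
        4 * T * \sum_(k < n | (k < n.-1)%N) (rsR B k - rn))) / 2 in
  bound <= rho /\
  (rho = bound <->
   ((forall i j, rsR B i = rsR B j) \/
    (0 < T /\ exists t : nat, [/\ (1 <= t)%N, (t <= n.-1)%N,
       (forall k : 'I_n, (k < t)%N -> B k k = S),
       (forall k l : 'I_n, (l < t)%N -> k != l -> B k l = T) &
       (forall k l : 'I_n, (t <= k)%N -> (t <= l)%N -> rsR B k = rsR B l)]))).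
Proof.
move=> n1 hl hrn B0 Hirr Hsort HS HT T0 HLB HUB bound.
have n0 : (0 < n)%N by apply: ltn_trans n1.
set r := rsR B.
have rge : forall k, rn <= r k.
  move=> k; rewrite hrn; apply: Hsort; have := ltn_ord k; rewrite hl; lia.
have rnS : S <= rn.
  rewrite hrn /rsR (bigD1 l) //=; have := HS l.
  have : 0 <= \sum_(i < n | i != l) B l i by apply: sumr_ge0 => i _; exact: B0.
  lra.
set Sig := \sum_(k < n | (k < n.-1)%N) (r k - rn).
have SigE : Sig = \sum_k (r k - rn).
  by apply: sum_filter_last hl _; rewrite hrn subrr.
have Sig0 : 0 <= Sig by rewrite SigE; apply: sumr_ge0 => k _; have := rge k; lra.
set w := rn - S + T.
have w0 : T <= w by rewrite /w; lra.
set D := w ^+ 2 + 4 * T * Sig.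
have D0 : 0 <= D.
  rewrite /D; apply: addr_ge0; first exact: sqr_ge0.
  by apply: mulr_ge0 => //; apply: mulr_ge0.
set q := Num.sqrt D.
have q0 : 0 <= q by apply: sqrtr_ge0.
have qq : q ^+ 2 = D by apply: sqr_sqrtr.
have qw : w <= q.
  have h4 : 0 <= 4 * T * Sig by apply: mulr_ge0 => //; apply: mulr_ge0.
  have h : w ^+ 2 <= q ^+ 2 by rewrite qq /D; lra.
  nra.
have bE : bound = (rn + S - T + q) / 2 by [].
have slack1 : forall th i, slack B (fun _ => 1) th i = r i - th.
  by move=> th i; rewrite /slack mulr1; congr (_ - _); apply: eq_bigr => j _; rewrite mulr1.
have [Tz|Tpos] := eqVneq T 0.
  have qE : q = rn - S.
    rewrite /q /D /w Tz mulr0 mul0r addr0 addr0 sqrtr_sqr ger0_norm //; lra.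
  have bE' : bound = rn by rewrite bE qE Tz; lra.
  have sl0 : forall i, 0 <= slack B (fun _ => 1) bound i.
    by move=> i; rewrite slack1 bE'; have := rge i; lra.
  have x0 : forall i : 'I_n, (0 : algR) < 1 by move=> _; exact: ltr01.
  have [lb eqv] := cw_eq n0 B0 Hirr HLB HUB x0 sl0.
  split => //; rewrite eqv; split.
    move=> h; left => i j; have hi := h i; have hj := h j; rewrite !slack1 in hi hj.
    by move/eqP: hi; rewrite subr_eq0 => /eqP->; move/eqP: hj; rewrite subr_eq0 => /eqP->.
  case=> [h i|[]]; last by rewrite Tz ltxx.
  by rewrite slack1 bE' hrn (h i l) subrr.
have Tp : 0 < T by rewrite lt_neqAle eq_sym Tpos T0.
set d := (w + q) / 2.
have d0 : 0 < d by rewrite /d; lra.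
have dE : d = bound - S + T by rewrite bE /d /w; lra.
pose c k := (r k - rn) / d.
have c0 : forall k, 0 <= c k by move=> k; rewrite /c divr_ge0 //; [have := rge k; lra | exact: ltW].
have cd : forall k, c k * d = r k - rn by move=> k; rewrite /c divfK // gt_eqF.
have ident : (bound - rn) * d = T * Sig.
  have h : (bound - rn) * d = (q ^+ 2 - w ^+ 2) / 4 by rewrite bE /d /w; field.
  by rewrite h qq /D; field.
have sumc : (\sum_k c k) * d = Sig.
  by rewrite mulr_suml SigE; apply: eq_bigr => k _; rewrite cd.
have thE : bound = rn + T * \sum_k c k.
  have h : (bound - rn) * d = (T * \sum_k c k) * d by rewrite ident -mulrA sumc.
  have := mulIf (lt0r_neq0 d0) h; lra.
pose x k := 1 + c k.
pose E i j := B i j - (if i == j then S else T).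
have E0 : forall i j, 0 <= E i j.
  move=> i j; rewrite /E; case: eqVneq => [->|ij]; [have := HS j | have := HT i j ij]; lra.
have slE : forall i, slack B x bound i = \sum_j E i j * c j.
  move=> i.
  have h1 : \sum_j B i j * x j = r i + \sum_j B i j * c j.
    by rewrite /x /r /rsR -big_split /=; apply: eq_bigr => j _; rewrite mulrDr mulr1.
  have h2 : \sum_j E i j * c j = \sum_j B i j * c j - (S * c i + T * (\sum_k c k - c i)).
    rewrite /E; under eq_bigr do rewrite mulrBl.
    rewrite sumrB; congr (_ - _).
    rewrite (bigD1 i) //= eqxx [in RHS](bigD1 i) //= addrAC subrr add0r mulr_sumr.
    congr (_ + _); apply: eq_bigr => j ji; by rewrite eq_sym (negPf ji).
  rewrite /slack h1 h2 /x.
  have := cd i; rewrite dE => h3.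
  rewrite thE in h3 *. 
  lra.
have x0 : forall i, 0 < x i by move=> i; rewrite /x; have := c0 i; lra.
have sl0 : forall i, 0 <= slack B x bound i.
  by move=> i; rewrite slE; apply: sumr_ge0 => j _; apply: mulr_ge0.
have [lb eqv] := cw_eq n0 B0 Hirr HLB HUB x0 sl0.
split => //; rewrite eqv.
have zero_iff : (forall i, slack B x bound i = 0) <-> (forall i j, E i j * c j = 0).
  split.
    move=> h i j; have := h i; rewrite slE => hs.
    by apply: (psumr_eq0P _ hs) => // k _; apply: mulr_ge0.
  by move=> h i; rewrite slE; apply: big1 => j _; exact: h.
rewrite zero_iff.
have cz : forall j, c j = 0 <-> r j = rn.
  move=> j; split => h.
    by have := cd j; rewrite h mul0r => /eqP; rewrite eq_sym subr_eq0 => /eqP.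
  by rewrite /c h subrr mul0r.
have Eeq : forall i j, E i j = 0 -> B i j = if i == j then S else T.
  by move=> i j; rewrite /E => /eqP; rewrite subr_eq0 => /eqP.
split.
  move=> h.
  case: (classic (forall j, r j = rn)) => [Hall|Hnot].
    by left => i j; rewrite !Hall.
  right; split => //.
  have exP : exists k, [exists j : 'I_n, (val j == k) && (r j == rn)].
    by exists (val l); apply/existsP; exists l; rewrite eqxx hrn eqxx.
  have [t Pt tmin] := ex_minnP exP.
  have [j0 /andP[/eqP j0t /eqP rj0]] := existsP Pt.
  have A1 : forall k : 'I_n, (t <= k)%N -> r k = rn.
    move=> k tk; apply/eqP; rewrite eq_le rge andbT -rj0; apply: Hsort; by rewrite j0t.
  have A2 : forall k : 'I_n, (k < t)%N -> c k != 0.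
    move=> k kt; apply/negP => /eqP /cz rk.
    have : (t <= k)%N by apply: tmin; apply/existsP; exists k; rewrite eqxx rk eqxx.
    by rewrite leqNgt kt.
  have Ez : forall i k : 'I_n, (k < t)%N -> E i k = 0.
    move=> i k kt; have := h i k => /eqP; rewrite mulf_eq0 (negPf (A2 k kt)) orbF.
    by move/eqP.
  exists t; split.
  - case: (posnP t) => [t0|//]; exfalso; apply: Hnot => k; apply: A1; by rewrite t0.
  - rewrite -hl; apply: tmin; apply/existsP; exists l; by rewrite eqxx hrn eqxx.
  - by move=> k kt; have := Eeq k k (Ez k k kt); rewrite eqxx.
  - by move=> k l' l't kl; have := Eeq k l' (Ez k l' l't); rewrite (negPf kl).
  - by move=> k l' tk tl; rewrite A1 // A1.
case=> [H|[_ [t [t1 tn Hi Hii Hiii]]]] i j.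
  by have := (proj2 (cz j)) (etrans (H j l) (esym hrn)) => ->; rewrite mulr0.
case: (ltnP j t) => jt.
  rewrite /E; case: eqVneq => [ij|ij].
    by rewrite ij Hi // subrr mul0r.
  by rewrite Hii // subrr mul0r.
have tl : (t <= l)%N by rewrite hl.
by rewrite ((proj2 (cz j)) (etrans (Hiii j l jt tl) (esym hrn))) mulr0.
Qed.

Lemma foldr_min_facts (s : seq algC) (a : algC) : 0 <= a -> (forall y, y \in s -> 0 <= y) ->
  let m := foldr Num.min a s in
  [/\ 0 <= m, m <= a & forall y, y \in s -> m <= y].
Proof.
move=> a0; elim: s => [|y s IH] Hs /=.
  by split.
have [IH1 IH2 IH3] : _ := IH (fun z zs => Hs z (ltac:(by rewrite inE zs orbT))).
set m := foldr Num.min a s in IH1 IH2 IH3 *.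
have y0 : 0 <= y by apply: Hs; rewrite inE eqxx.
have yR : y \is Num.real by apply: ger0_real.
have mR : m \is Num.real by apply: ger0_real.
case: (real_leP yR mR) => h.
  split => //; first exact: le_trans h IH2.
  by move=> z; rewrite inE => /orP[/eqP->|/IH3 hz] //; apply: le_trans h hz.
split => //.
by move=> z; rewrite inE => /orP[/eqP->|/IH3 hz] //; apply: ltW.
Qed.

Lemma seq_min_facts (s : seq algC) : (forall y, y \in s -> 0 <= y) ->
  0 <= seq_min s /\ forall y, y \in s -> seq_min s <= y.
Proof.
move=> Hs; have a0 : 0 <= head 0 s by case: s Hs => [|y s] //= Hs; apply: Hs; rewrite inE eqxx.
by have [h1 _ h3] := foldr_min_facts a0 Hs.
Qed.

Unset Implicit Arguments.

Theorem corollary3 (n : nat) (A : 'M[algC]_n) :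
  (2 <= n)%N ->
  nonneg_mx A ->
  irreducible_mx A ->
  (forall i j : 'I_n, (i <= j)%N -> row_sum A j <= row_sum A i) ->
  let r := row_sum A in
  let rn := last_row_sum A in
  let S := diag_min A in
  let T := offdiag_min A in
  let bound :=
    (rn + S - T
      + sqrtC ((rn - S + T) ^+ 2
               + 4 * T * \sum_(k < n | (k < n.-1)%N) (r k - rn))) / 2 in
  bound <= spectral_radius A /\
  (spectral_radius A = bound <->
     ((forall i j : 'I_n, r i = r j) \/
      (0 < T /\
       exists t : nat, [/\ (1 <= t)%N, (t <= n.-1)%N,
         (forall k : 'I_n, (k < t)%N -> A k k = S),
         (forall k l : 'I_n, (l < t)%N -> k != l -> A k l = T) &
         (forall k l : 'I_n, (t <= k)%N -> (t <= l)%N -> r k = r l)]))).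
Proof.
move=> n2 HA Hirr Hsort r rn S T bound.
have n0 : (0 < n)%N by apply: ltn_trans n2.
have AR : forall i j, A i j \is Num.real by move=> i j; apply: ger0_real; apply: HA.
pose B : 'M[algR]_n := \matrix_(i, j) in_algR (AR i j).
have AB : forall i j, A i j = val (B i j) by move=> i j; rewrite mxE.
have B0 : forall i j, (0 : algR) <= B i j by move=> i j; have := HA i j; rewrite AB.
have hrs : forall i, row_sum A i = val (rsR B i).
  by move=> i; rewrite /rsR rmorph_sum; apply: eq_bigr => j _; rewrite AB.
have [hS0 hSle] : 0 <= S /\ forall y, y \in [seq A i i | i <- enum 'I_n] -> S <= y.
  by apply: seq_min_facts => y /mapP [i _ ->]; apply: HA.
have hSi : forall i, S <= A i i.
  by move=> i; apply: hSle; apply/mapP; exists i => //; rewrite mem_enum.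
have [hT0 hTle] : 0 <= T /\ forall y, y \in [seq A ij.1 ij.2 | ij <- enum [pred ij : 'I_n * 'I_n | ij.1 != ij.2]] -> T <= y.
  by apply: seq_min_facts => y /mapP [ij _ ->]; apply: HA.
have hTij : forall i j, i != j -> T <= A i j.
  move=> i j ij; apply: hTle.
  by apply/mapP; exists (i, j) => //; rewrite mem_enum inE /=.
pose SR := in_algR (ger0_real hS0).
pose TR := in_algR (ger0_real hT0).
have ln : (n.-1 < n)%N by rewrite prednK.
pose l := Ordinal ln.
have hl : val l = n.-1 by [].
have hrn : rn = val (rsR B l).
  rewrite /rn /last_row_sum (nth_map l) ?size_enum_ord //.
  rewrite -hrs; congr (row_sum A _); apply: val_inj => /=; by rewrite nth_enum_ord.
pose rhoR := in_algR (ger0_real (sr_ge0 A)).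
have HLB : forall (y : 'I_n -> algR) t, (forall i, 0 < y i) ->
     (forall i, t * y i <= \sum_j B i j * y j) -> t <= rhoR.
  by move=> y t y0 Hy; exact: (LB_C AB n0 B0 y0 Hy).
have HUB : forall (y : 'I_n -> algR) t, (forall i, 0 < y i) ->
     (forall i, \sum_j B i j * y j = t * y i) -> rhoR <= t.
  by move=> y t y0 Hy; exact: (UB_C AB n0 B0 y0 Hy).
have Hirr' : forall I : {set 'I_n}, I != set0 -> I != setT ->
     exists i j, [/\ i \in I, j \notin I & B i j != 0].
  move=> I h1 h2; apply: NNPP => Hn; apply: Hirr; exists I; split => // i j iI jI.
  rewrite AB; case: (eqVneq (B i j) 0) => [->|Bn]; first by rewrite rmorph0.
  by exfalso; apply: Hn; exists i, j; split.
have Hsort' : forall i j : 'I_n, (i <= j)%N -> rsR B j <= rsR B i.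
  by move=> i j hij; have := Hsort i j hij; rewrite !hrs.
have HS' : forall i, SR <= B i i by move=> i; have := hSi i; rewrite AB.
have HT' : forall i j, i != j -> TR <= B i j by move=> i j ij; have := hTij i j ij; rewrite AB.
have T0' : (0 : algR) <= TR by [].
have := main_R n2 hl erefl B0 Hirr' Hsort' HS' HT' T0' HLB HUB.
move=> /= [lbR eqvR].
set SigR := \sum_(k < n | (k < n.-1)%N) (rsR B k - rsR B l) in lbR eqvR.
set DR := (rsR B l - SR + TR) ^+ 2 + 4 * TR * SigR in lbR eqvR.
set boundR := (_ + Num.sqrt DR) / 2 in lbR eqvR.
have hsum : \sum_(k < n | (k < n.-1)%N) (r k - rn) = val SigR.
  by rewrite rmorph_sum; apply: eq_bigr => k _; rewrite rmorphB /= -hrs -hrn.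
have hD : (rn - S + T) ^+ 2 + 4 * T * \sum_(k < n | (k < n.-1)%N) (r k - rn) = val DR.
  by rewrite hsum /DR !(rmorphD, rmorphB, rmorphM, rmorphXn, rmorph_nat) /= -hrn.
have SigR0 : 0 <= SigR.
  apply: sumr_ge0 => k hk; rewrite subr_ge0; apply: Hsort'; rewrite hl.
  exact: ltnW hk.
have DR0 : 0 <= DR by rewrite /DR; apply: addr_ge0; [exact: sqr_ge0 | apply: mulr_ge0 => //; apply: mulr_ge0].
have hsq : sqrtC (val DR) = val (Num.sqrt DR).
  have e : val DR = (val (Num.sqrt DR)) ^+ 2 by rewrite -rmorphXn sqr_sqrtr.
  by rewrite e sqrCK //; have := sqrtr_ge0 DR.
have hb : bound = val boundR.
  by rewrite /bound hD hsq /boundR fmorph_div !(rmorphD, rmorphB, rmorph_nat) /= -hrn.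
have hsr : spectral_radius A = val rhoR by [].
rewrite hb hsr; split; first exact: lbR.
split.
  move=> /val_inj /eqvR [H|[TP [t [t1 tn Hk Hkl Hr]]]].
    by left => i j; rewrite /r !hrs (H i j).
  right; split; first exact: TP.
  exists t; split => //.
  - by move=> k kt; rewrite AB Hk.
  - by move=> k l0 lt kl; rewrite AB Hkl.
  - by move=> k l0 tk tl; rewrite /r !hrs (Hr k l0 tk tl).
move=> H; congr val; apply/eqvR; case: H => [H|[TP [t [t1 tn Hk Hkl Hr]]]].
  by left => i j; apply: val_inj; rewrite -!hrs; exact: H.
right; split; first exact: TP.
exists t; split => //.
- by move=> k kt; apply: val_inj; rewrite -AB; exact: Hk.
- by move=> k l0 lt kl; apply: val_inj; rewrite -AB; exact: Hkl.
- by move=> k l0 tk tl; apply: val_inj; rewrite -!hrs; exact: Hr.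
Qed.
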